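(* Let $\Gamma$ be either (type II) $\Gamma^n_{i,j;\geq k}(\mathbb{L})$ with $0\leq k<\min\{i,j\}$ and $i+j\leq n-1$, or (type III) $\Gamma^n_{i,j;k}(\mathbb{L})$ with $-1\leq k<\min\{i,j\}$, $i+j\leq n-1$ and $|\mathbb{L}|\neq 2$. Then every $\Gamma$-round-up triple $\{J_1,J_2,J_3\}$ of $j$-spaces is a regular round-up triple, i.e. $J_1\cap J_2\cap J_3$ is a $(j-1)$-space and $\langle J_1,J_2,J_3\rangle$ is a $(j+1)$-space.
   Context: $\mathrm{PG}(n,\mathbb{L})$ is the projective space of an $(n+1)$-dimensional vector space over the skew field $\mathbb{L}$; an $m$-space is an $(m+1)$-dimensional vector subspace, and $\langle\cdot\rangle$ denotes the span. $\Gamma^n_{i,j;k}(\mathbb{L})$ is the bipartite graph with biparts the $i$-spaces and the $j$-spaces, an $i$-space adjacent to a $j$-space iff they meet in exactly a $k$-space; in $\Gamma^n_{i,j;\geq k}(\mathbb{L})$ adjacency means they meet in a subspace of dimension at least $k$. Here $i\le j$ is not assumed. A $\Gamma$-round-up triple is a set $\{J_1,J_2,J_3\}$ of three $j$-spaces such that no $i$-space is $\Gamma$-adjacent to exactly two of $J_1,J_2,J_3$, and some $i$-space is $\Gamma$-adjacent to all three. *)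

(* Defs.v *)
(* Projective geometry PG(n,L) over a skew field L, modelled
   as subspaces of the left vector space of row vectors 'rV[L]_(n.+1). *)
From HB Require Import structures.
From mathcomp Require Import all_boot all_order all_algebra.
Set Implicit Arguments. Unset Strict Implicit. Unset Printing Implicit Defensive.
Import Order.TTheory GRing.Theory Num.Theory.
Local Open Scope ring_scope.

Section PG.
Variables (L : unitRingType) (N : nat).
Local Notation V := 'rV[L]_N.

Definition skew_field := forall x : L, x != 0 -> x \is a GRing.unit.

Definition subspace (S : V -> Prop) :=
  [/\ S 0, forall x y, S x -> S y -> S (x + y) & forall (a : L) x, S x -> S (a *: x)].

Definition lin_indep d (v : 'I_d -> V) :=
  forall c : 'I_d -> L, \sum_(t < d) c t *: v t = 0 -> forall t, c t = 0.

Definition in_span d (v : 'I_d -> V) (x : V) :=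
  exists c : 'I_d -> L, x = \sum_(t < d) c t *: v t.

Definition has_vdim (d : nat) (S : V -> Prop) :=
  exists v : 'I_d -> V, lin_indep v /\ forall x, S x <-> in_span v x.

Definition is_pspace (m : int) (S : V -> Prop) :=
  exists d : nat, (d%:Z = m + 1)%R /\ has_vdim d S.

Definition meet (S T : V -> Prop) : V -> Prop := fun x => S x /\ T x.

Definition same_space (S T : V -> Prop) := forall x, S x <-> T x.

Definition span3 (J1 J2 J3 : V -> Prop) : V -> Prop :=
  fun x => forall S, subspace S -> (forall y, J1 y \/ J2 y \/ J3 y -> S y) -> S x.

Definition adj_eq (k : int) (I J : V -> Prop) := is_pspace k (meet I J).

Definition adj_ge (k : int) (I J : V -> Prop) :=
  exists m : int, (k <= m)%R /\ is_pspace m (meet I J).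

Definition exactly_two (a b c : Prop) :=
  [\/ a /\ b /\ ~ c, a /\ ~ b /\ c | ~ a /\ b /\ c].

Definition round_up_triple (Gamma : (V -> Prop) -> (V -> Prop) -> Prop)
  (i j : nat) (J1 J2 J3 : V -> Prop) :=
  [/\ is_pspace j%:Z J1, is_pspace j%:Z J2, is_pspace j%:Z J3,
      [/\ ~ same_space J1 J2, ~ same_space J1 J3 & ~ same_space J2 J3] &
      (forall I, is_pspace i%:Z I -> ~ exactly_two (Gamma I J1) (Gamma I J2) (Gamma I J3))
    /\ exists I, [/\ is_pspace i%:Z I, Gamma I J1, Gamma I J2 & Gamma I J3]].

End PG.

(* Main.v *)
Require Import Defs.
From HB Require Import structures.
From mathcomp Require Import all_boot all_order all_algebra.
From Stdlib Require Import Classical ClassicalEpsilon Lia.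
From mathcomp Require Import zify.
Set Implicit Arguments. Unset Strict Implicit. Unset Printing Implicit Defensive.
Import Order.TTheory GRing.Theory Num.Theory.
Local Open Scope ring_scope.

Section LA.
Variables (L : unitRingType) (HL : skew_field L) (N : nat).
Local Notation V := 'rV[L]_N.

Lemma unitP (a : L) : a != 0 -> a^-1 * a = 1.
Proof. by move=> a0; rewrite mulVr // HL. Qed.
Lemma unitP' (a : L) : a != 0 -> a * a^-1 = 1.
Proof. by move=> a0; rewrite divrr // HL. Qed.

Lemma scale_eq0 (a : L) (v : V) : a *: v = 0 -> a != 0 -> v = 0.
Proof. by move=> h a0; rewrite -[v]scale1r -(unitP a0) -scalerA h scaler0. Qed.

Fixpoint sp (s : seq V) (x : V) : Prop :=
  if s is v :: s' then exists a, sp s' (x - a *: v) else x = 0.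

Lemma sp_subspace s : subspace (sp s).
Proof.
elim: s => [|v s [h0 hD hZ]] /=.
  split => //; first by move=> x y -> ->; rewrite addr0.
  by move=> a x ->; rewrite scaler0.
split.
- by exists 0; rewrite scale0r subr0.
- move=> x y [a ha] [b hb]; exists (a + b).
  have -> : x + y - (a + b) *: v = (x - a *: v) + (y - b *: v).
    by rewrite scalerDl opprD addrACA.
  exact: hD.
- move=> c x [a ha]; exists (c * a).
  by rewrite -scalerA -scalerBr; apply: hZ.
Qed.

Lemma sp0 s : sp s 0. Proof. by case: (sp_subspace s). Qed.
Lemma spD s x y : sp s x -> sp s y -> sp s (x + y).
Proof. by case: (sp_subspace s) => _ h _; apply: h. Qed.
Lemma spZ s a x : sp s x -> sp s (a *: x).
Proof. by case: (sp_subspace s) => _ _ h; apply: h. Qed.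
Lemma spN s x : sp s x -> sp s (- x).
Proof. by move=> h; rewrite -scaleN1r; apply: spZ. Qed.
Lemma spB s x y : sp s x -> sp s y -> sp s (x - y).
Proof. by move=> hx hy; apply: spD => //; apply: spN. Qed.

Lemma subspace0 (S : V -> Prop) : subspace S -> S 0. Proof. by case. Qed.
Lemma subspaceD (S : V -> Prop) x y : subspace S -> S x -> S y -> S (x + y).
Proof. by case=> _ h _; apply: h. Qed.
Lemma subspaceZ (S : V -> Prop) a x : subspace S -> S x -> S (a *: x).
Proof. by case=> _ _ h; apply: h. Qed.
Lemma subspaceN (S : V -> Prop) x : subspace S -> S x -> S (- x).
Proof. by move=> hS h; rewrite -scaleN1r; apply: subspaceZ. Qed.
Lemma subspaceB (S : V -> Prop) x y : subspace S -> S x -> S y -> S (x - y).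
Proof. by move=> hS hx hy; apply: subspaceD => //; apply: subspaceN. Qed.

Lemma sp_cons0 v s x : sp s x -> sp (v :: s) x.
Proof. by move=> h; exists 0; rewrite scale0r subr0. Qed.

Lemma sp_min (S : V -> Prop) s x : subspace S -> (forall v, v \in s -> S v) -> sp s x -> S x.
Proof.
move=> hS; elim: s x => [|v s IH] x /= hs; first by move->; apply: subspace0.
case=> a ha.
have -> : x = (x - a *: v) + a *: v by rewrite subrK.
apply: subspaceD => //; last by apply: subspaceZ => //; apply: hs; rewrite inE eqxx.
by apply: IH ha => w hw; apply: hs; rewrite inE hw orbT.
Qed.

Lemma mem_sp s v : v \in s -> sp s v.
Proof.
elim: s => [|w s IH] //=; rewrite inE => /orP[/eqP->|h].
  by exists 1; rewrite scale1r subrr; apply: sp0.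
by apply: sp_cons0; apply: IH.
Qed.

Lemma sp_sub s t x : (forall v, v \in s -> sp t v) -> sp s x -> sp t x.
Proof. by move=> h; apply: sp_min => //; apply: sp_subspace. Qed.

Lemma sp_mem_eq s t x : s =i t -> sp s x -> sp t x.
Proof. by move=> e; apply: sp_sub => v hv; apply: mem_sp; rewrite -e. Qed.

Lemma sp_cat s t x : sp (s ++ t) x <-> exists y z, [/\ sp s y, sp t z & x = y + z].
Proof.
elim: s x => [|v s IH] x /=.
  split; first by move=> h; exists 0, x; rewrite add0r.
  by case=> y [z [-> h ->]]; rewrite add0r.
split.
  case=> a /IH [y [z [hy hz e]]]; exists (y + a *: v), z; split => //.
    by exists a; rewrite addrK.
  by rewrite addrAC -e subrK.
case=> y [z [[a ha] hz ->]]; exists a; apply/IH; exists (y - a *: v), z; split => //.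
by rewrite addrAC.
Qed.

Definition indep (s : seq V) :=
  uniq s /\ forall x, x \in s -> ~ sp (filter (predC1 x) s) x.

Lemma indep_cons v s : indep (v :: s) <-> ~ sp s v /\ indep s.
Proof.
split.
  case=> /= /andP[vs us] h; split.
    move: (h v (mem_head _ _)); rewrite /= eqxx /=.
    by move=> h1 h2; apply: h1; apply: sp_mem_eq h2 => y; rewrite mem_filter /=;
      case: eqP => // ->; rewrite (negbTE vs).
  split => // x xs hx; apply: (h x); first by rewrite inE xs orbT.
  rewrite /=; case: eqP => [ex|_]; first by move: vs; rewrite ex xs.
  by apply: sp_cons0.
case=> nv [us h].
have vs : v \notin s by apply/negP => vs; apply: nv; exact: mem_sp.
split; first by rewrite /= us vs.
move=> x; rewrite inE => /orP[/eqP->|xs] /=.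
  rewrite eqxx /= => h1; apply: nv; apply: sp_mem_eq h1 => y.
  rewrite mem_filter /=; case: eqP => // ->.
  by rewrite (negbTE vs).
case: eqP => [ev|nev] /=.
  by move=> _; apply: nv; rewrite ev; exact: mem_sp.
case=> a ha.
have [a0|a0] := eqVneq a 0.
  by move: ha; rewrite a0 scale0r subr0; apply: h.
apply: nv; apply: (@sp_sub (x :: filter (predC1 x) s)).
  move=> y; rewrite inE => /orP[/eqP->|]; first exact: mem_sp.
  by rewrite mem_filter => /andP[_ ys]; apply: mem_sp.
exists a^-1.
have -> : v - a^-1 *: x = - (a^-1 *: (x - a *: v)).
  by rewrite scalerBr scalerA unitP // scale1r opprB.
by apply: spN; apply: spZ.
Qed.

Lemma indep_mem s t : uniq t -> s =i t -> indep s -> indep t.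
Proof.
move=> ut e [us h]; split => // x; rewrite -e => xs hx; apply: (h x xs).
apply: sp_mem_eq hx => y; by rewrite !mem_filter e.
Qed.

Lemma indep_perm s t : perm_eq s t -> indep s -> indep t.
Proof.
move=> p hs; apply: (indep_mem _ (perm_mem p)) => //.
by rewrite -(perm_uniq p); case: hs.
Qed.

Lemma indep_cat s t : indep (s ++ t) <->
  [/\ indep s, indep t & forall x, sp s x -> sp t x -> x = 0].
Proof.
elim: s => [|v s IH] /=.
  split; first by move=> h; split; [by split | exact: h | by move=> x ->].
  by case.
split.
  move/indep_cons=> [nv /IH [hs ht hst]]; split => //.
    apply/indep_cons; split => // h; apply: nv; apply/sp_cat; exists v, 0; split => //; [exact: sp0|by rewrite addr0].
  move=> x [a ha] hx.
  have [a0|a0] := eqVneq a 0.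
    by move: ha; rewrite a0 scale0r subr0 => ha; apply: hst.
  exfalso; apply: nv; apply/sp_cat.
  exists (- (a^-1 *: (x - a *: v))), (a^-1 *: x); split.
  - by apply: spN; apply: spZ.
  - by apply: spZ.
  - by rewrite scalerBr scalerA unitP // scale1r opprB subrK.
case=> /indep_cons [nv hs] ht hst; apply/indep_cons; split; last first.
  by apply/IH; split => // x hx hx'; apply: hst => //; apply: sp_cons0.
case/sp_cat=> y [z [hy hz e]].
have hz0 : z = 0.
  apply: hst => //; exists 1; rewrite scale1r.
  have -> : z - v = - y by rewrite e opprD addrCA subrr addr0.
  exact: spN.
by apply: nv; rewrite e hz0 addr0.
Qed.

Lemma sp_subl (s t : seq V) x : sp s x -> (forall y, y \in s -> y \in t) -> sp t x.
Proof. by move=> hx h; apply: sp_sub hx => v hv; apply: mem_sp; apply: h. Qed.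
Lemma sp_le s t x : sp s x -> (forall v, v \in s -> sp t v) -> sp t x.
Proof. by move=> hx h; apply: sp_sub hx. Qed.

Lemma exch u t v : ~ sp u v -> sp (t ++ u) v ->
  exists t1 w t2, t = t1 ++ w :: t2 /\ sp (v :: t1 ++ t2 ++ u) w.
Proof.
move=> nu; elim: t => [|w t IH] /=; first by move=> h; exfalso; apply: nu.
case=> a ha.
have [a0|a0] := eqVneq a 0.
  move: ha; rewrite a0 scale0r subr0 => /IH [t1 [w' [t2 [-> h]]]].
  exists (w :: t1), w', t2; split; first by [].
  change (sp (v :: (w :: t1) ++ t2 ++ u) w'); apply: (sp_subl h) => y.
  rewrite /= !in_cons !mem_cat.
  by case/orP=> [->//|/orP[->|/orP[->|->]]]; rewrite ?orbT.
exists [::], w, t; split => //=; exists a^-1.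
have -> : w - a^-1 *: v = - (a^-1 *: (v - a *: w)).
  by rewrite scalerBr scalerA unitP // scale1r opprB.
by apply: spN; apply: spZ.
Qed.

Lemma steinitz_gen s : forall u t, indep (s ++ u) ->
  (forall x, x \in s -> sp (u ++ t) x) -> (size s <= size t)%N.
Proof.
elim: s => [|v s IH] u t //= hvi hs; have /indep_cons [nv hi] := hvi.
have nu : ~ sp u v by move=> h; apply: nv; apply: (sp_subl h) => y hy; rewrite mem_cat hy orbT.
have hv : sp (t ++ u) v.
  by apply: (sp_subl (hs v (mem_head _ _))) => y; rewrite !mem_cat orbC.
have [t1 [w [t2 [et hw]]]] := exch nu hv.
have : (size s <= size (t1 ++ t2))%N.
  apply: (IH (v :: u)).
    by apply: (indep_perm _ hvi); move: (perm_catCA [:: v] s u) => /= ->.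
  move=> x xs; have xs' : x \in v :: s by rewrite inE xs orbT.
  apply: (sp_le (hs x xs')) => y.
  rewrite et mem_cat mem_cat inE.
  case/orP=> [yu|/orP[yt1|/orP[/eqP->|yt2]]].
  - by apply: mem_sp; rewrite !(mem_cat, in_cons) yu ?orbT.
  - by apply: mem_sp; rewrite !(mem_cat, in_cons) yt1 ?orbT.
  - apply: (sp_subl hw) => z; rewrite !(mem_cat, in_cons).
    by case/orP=> [->//|/orP[->|/orP[->|->]]]; rewrite ?orbT.
  - by apply: mem_sp; rewrite !(mem_cat, in_cons) yt2 ?orbT.
by rewrite et size_cat /= size_cat addnS.
Qed.

Lemma steinitz s t : indep s -> (forall x, x \in s -> sp t x) -> (size s <= size t)%N.
Proof. by move=> hi hs; apply: (@steinitz_gen s [::] t); rewrite ?cats0. Qed.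

Definition E : seq V := [seq delta_mx 0 j | j <- enum 'I_N].
Lemma size_E : size E = N. Proof. by rewrite size_map size_enum_ord. Qed.
Lemma spE x : sp E x.
Proof.
rewrite (matrix_sum_delta x) big_ord1.
apply: big_ind; [exact: sp0 | exact: spD |].
move=> j _; apply: spZ; apply: mem_sp; apply: map_f; by rewrite mem_enum.
Qed.

Lemma indep_size s : indep s -> (size s <= N)%N.
Proof. by move=> hi; have := steinitz hi (fun x _ => spE x); rewrite size_E. Qed.

Lemma subspace_ext (S T : V -> Prop) : (forall x, S x <-> T x) -> subspace T -> subspace S.
Proof.
move=> e [h0 hD hZ]; split; first by apply/e.
  by move=> x y /e hx /e hy; apply/e; apply: hD.
by move=> a x /e hx; apply/e; apply: hZ.
Qed.

Lemma ext_step (S : V -> Prop) s : subspace S -> (forall x, x \in s -> S x) ->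
  (forall x, S x <-> sp s x) \/ exists x, S x /\ ~ sp s x.
Proof.
move=> hS hsS; case: (classic (forall x, S x -> sp s x)) => [all|/not_all_ex_not [x hx]].
  by left => x; split; [exact: all | exact: sp_min hS hsS].
right; exists x; split; first by apply: NNPP => nS; apply: hx => /nS.
by move=> h; apply: hx => _.
Qed.

Lemma extend_aux k : forall (S : V -> Prop) s, subspace S -> indep s ->
  (forall x, x \in s -> S x) -> (N - size s <= k)%N ->
  exists r, indep (r ++ s) /\ (forall x, S x <-> sp (r ++ s) x).
Proof.
elim: k => [|k IH] S s hS hs hsS hk;
  (case: (ext_step hS hsS) => [e|[x [Sx nx]]]; first by exists [::]);
  (have hi : indep (x :: s) by apply/indep_cons);
  move: (indep_size hi) => /= hz.
  exfalso; move: hk hz; clear; lia.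
have [r [hr e]] : exists r, indep (r ++ x :: s) /\ (forall y, S y <-> sp (r ++ x :: s) y).
  apply: IH => //; last by rewrite /=; move: hk hz; clear; lia.
  by move=> y; rewrite inE => /orP[/eqP->|]//; apply: hsS.
by exists (rcons r x); rewrite cat_rcons.
Qed.

Lemma extend (S : V -> Prop) s : subspace S -> indep s -> (forall x, x \in s -> S x) ->
  exists r, indep (r ++ s) /\ (forall x, S x <-> sp (r ++ s) x).
Proof. by move=> hS hs hsS; apply: (@extend_aux N) => //; apply: leq_subr. Qed.

Lemma indep_nil : indep [::]. Proof. by split. Qed.

Definition dimv (S : V -> Prop) (d : nat) :=
  exists s, [/\ indep s, size s = d & forall x, S x <-> sp s x].

Lemma dimv_exists (S : V -> Prop) : subspace S -> exists d, dimv S d.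
Proof.
move=> hS; have [r [hr e]] := @extend S [::] hS indep_nil (fun x (hx : x \in [::]) => ltac:(by [])).
by exists (size (r ++ [::])), (r ++ [::]); split.
Qed.

Lemma dimv_uniq (S : V -> Prop) d d' : dimv S d -> dimv S d' -> d = d'.
Proof.
case=> s [hs <- e] [t [ht <- e']]; apply/eqP; rewrite eqn_leq.
rewrite (steinitz hs) ?(steinitz ht) // => x xs.
  by apply/e; apply/e'; apply: mem_sp.
by apply/e'; apply/e; apply: mem_sp.
Qed.

Definition dimf (S : V -> Prop) : nat := epsilon (inhabits 0%N) (dimv S).

Lemma dimf_spec (S : V -> Prop) : subspace S -> dimv S (dimf S).
Proof. by move=> hS; apply: epsilon_spec; apply: dimv_exists. Qed.

Lemma dimf_dimv (S : V -> Prop) d : dimv S d -> dimf S = d.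
Proof.
move=> h; have hS : subspace S by case: h => s [_ _ e]; exact: (subspace_ext e (sp_subspace s)).
exact: dimv_uniq (dimf_spec hS) h.
Qed.

Lemma dimf_sp s : indep s -> dimf (sp s) = size s.
Proof. by move=> hs; apply: dimf_dimv; exists s. Qed.

Lemma basis (S : V -> Prop) : subspace S ->
  exists s, [/\ indep s, size s = dimf S & forall x, S x <-> sp s x].
Proof. by move/dimf_spec. Qed.

Lemma dimf_ext (S T : V -> Prop) : subspace S -> (forall x, S x <-> T x) -> dimf S = dimf T.
Proof.
move=> hS e; have [s [hs <- es]] := basis hS.
by apply/esym/dimf_dimv; exists s; split => // x; rewrite -e.
Qed.

Definition subs (S T : V -> Prop) := forall x, S x -> T x.

Lemma dimf_le (S T : V -> Prop) : subspace S -> subspace T -> subs S T -> (dimf S <= dimf T)%N.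
Proof.
move=> hS hT st; have [s [hs <- es]] := basis hS; have [t [ht <- et]] := basis hT.
by apply: steinitz => // x xs; apply/et; apply: st; apply/es; apply: mem_sp.
Qed.

Lemma dimf_eq_sub (S T : V -> Prop) : subspace S -> subspace T -> subs S T ->
  (dimf T <= dimf S)%N -> subs T S.
Proof.
move=> hS hT st le; have [s [hs ds es]] := basis hS.
have [r [hr er]] := extend hT hs (fun x hx => st x (proj2 (es x) (mem_sp hx))).
have : dimf T = size (r ++ s) by apply: dimf_dimv; exists (r ++ s).
rewrite size_cat ds => dT.
have r0 : r = [::] by apply/size0nil; move: le; rewrite dT; clear; lia.
by move=> x /er; rewrite r0 /= => /es.
Qed.

Lemma dimf_lt_ex (S T : V -> Prop) : subspace S -> subspace T ->
  (dimf S < dimf T)%N -> exists x, T x /\ ~ S x.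
Proof.
move=> hS hT lt; apply: NNPP => h.
have st : subs T S.
  by move=> x Tx; apply: NNPP => nS; apply: h; exists x.
by move: (dimf_le hT hS st); move: lt; clear; lia.
Qed.

Lemma dimf_le_N (S : V -> Prop) : subspace S -> (dimf S <= N)%N.
Proof. by move=> hS; have [s [hs <- _]] := basis hS; apply: indep_size. Qed.

Lemma dimf_subs_eq (S T : V -> Prop) : subspace S -> subspace T -> subs S T ->
  dimf S = dimf T -> forall x, S x <-> T x.
Proof.
move=> hS hT st e x; split; first exact: st.
by apply: (dimf_eq_sub hS hT st); rewrite e.
Qed.

Definition sumS (S T : V -> Prop) : V -> Prop := fun y => exists u w, [/\ S u, T w & y = u + w].

Lemma subspace_meet (S T : V -> Prop) : subspace S -> subspace T -> subspace (meet S T).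
Proof.
move=> hS hT; split; first by split; apply: subspace0.
  by move=> x y [? ?] [? ?]; split; apply: subspaceD.
by move=> a x [? ?]; split; apply: subspaceZ.
Qed.

Lemma subspace_sum (S T : V -> Prop) : subspace S -> subspace T -> subspace (sumS S T).
Proof.
move=> hS hT; split.
- by exists 0, 0; split; rewrite ?addr0 //; apply: subspace0.
- move=> x y [u [w [hu hw ->]]] [u' [w' [hu' hw' ->]]].
  by exists (u + u'), (w + w'); split; [apply: subspaceD|apply: subspaceD|rewrite addrACA].
- move=> a x [u [w [hu hw ->]]].
  by exists (a *: u), (a *: w); split; [apply: subspaceZ|apply: subspaceZ|rewrite scalerDr].
Qed.

Lemma sumS_l (S T : V -> Prop) x : subspace T -> S x -> sumS S T x.
Proof. by move=> hT Sx; exists x, 0; split; rewrite ?addr0 //; apply: subspace0. Qed.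
Lemma sumS_r (S T : V -> Prop) x : subspace S -> T x -> sumS S T x.
Proof. by move=> hS Tx; exists 0, x; split; rewrite ?add0r //; apply: subspace0. Qed.
Lemma sumS_min (S T U : V -> Prop) : subspace U -> subs S U -> subs T U -> subs (sumS S T) U.
Proof. by move=> hU su tu x [u [w [hu hw ->]]]; apply: subspaceD => //; [apply: su|apply: tu]. Qed.

Lemma grassmann (S T : V -> Prop) : subspace S -> subspace T ->
  (dimf (sumS S T) + dimf (meet S T) = dimf S + dimf T)%N.
Proof.
move=> hS hT.
have hM := subspace_meet hS hT.
have [s0 [h0 d0 e0]] := basis hM.
have [r1 [h1 e1]] := extend hS h0 (fun x hx => proj1 (proj2 (e0 x) (mem_sp hx))).
have [r2 [h2 e2]] := extend hT h0 (fun x hx => proj2 (proj2 (e0 x) (mem_sp hx))).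
have dS : dimf S = size (r1 ++ s0) by apply: dimf_dimv; exists (r1 ++ s0).
have dT : dimf T = size (r2 ++ s0) by apply: dimf_dimv; exists (r2 ++ s0).
have /indep_cat [hr1 _ d1] := h1.
have hi : indep (r1 ++ r2 ++ s0).
  apply/indep_cat; split => // x xr1 xr2s.
  apply: d1 => //; apply/e0; split.
    by apply/e1; apply: (sp_subl xr1) => y; rewrite mem_cat => ->.
  by apply/e2.
have dU : dimf (sumS S T) = size (r1 ++ r2 ++ s0).
  apply: dimf_dimv; exists (r1 ++ r2 ++ s0); split => // x; split.
    case=> u [w [/e1 hu /e2 hw ->]]; apply: spD.
      by apply: (sp_subl hu) => y; rewrite !mem_cat => /orP[->|->]; rewrite ?orbT.
    by apply: (sp_subl hw) => y; rewrite !mem_cat => /orP[->|->]; rewrite ?orbT.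
  case/sp_cat=> y [z [hy /sp_cat [z1 [z2 [hz1 hz2 ->]]] ->]].
  exists (y + z2), z1; split; last by rewrite addrAC addrA.
    apply/e1; apply/sp_cat; exists y, z2; split => //.
  apply/e2; apply: (sp_subl hz1) => w; rewrite mem_cat => ->.
  done.
rewrite dU dS dT -d0 !size_cat; clear; lia.
Qed.

Definition addv (S : V -> Prop) (x : V) : V -> Prop := fun y => exists a, S (y - a *: x).

Lemma addv_sp s x y : addv (sp s) x y <-> sp (x :: s) y. Proof. by []. Qed.

Lemma addv_ext (S T : V -> Prop) x : (forall y, S y <-> T y) -> forall y, addv S x y <-> addv T x y.
Proof. by move=> e y; split; case=> a h; exists a; apply/e. Qed.

Lemma subspace_addv (S : V -> Prop) x : subspace S -> subspace (addv S x).
Proof.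
move=> hS; have [s [hs _ es]] := basis hS.
apply: (subspace_ext (addv_ext x es)); exact: (sp_subspace (x :: s)).
Qed.

Lemma addv_l (S : V -> Prop) x y : S y -> addv S x y.
Proof. by move=> h; exists 0; rewrite scale0r subr0. Qed.
Lemma addv_x (S : V -> Prop) x : subspace S -> addv S x x.
Proof. by move=> hS; exists 1; rewrite scale1r subrr; apply: subspace0. Qed.
Lemma addv_min (S U : V -> Prop) x : subspace U -> subs S U -> U x -> subs (addv S x) U.
Proof.
move=> hU su ux y [a ha]; have -> : y = (y - a *: x) + a *: x by rewrite subrK.
by apply: subspaceD => //; [apply: su | apply: subspaceZ].
Qed.

Lemma dimf_addv (S : V -> Prop) x : subspace S -> ~ S x -> dimf (addv S x) = (dimf S).+1.
Proof.
move=> hS nx; have [s [hs ds es]] := basis hS.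
apply: dimf_dimv; exists (x :: s); split => //=; first by apply/indep_cons; split => // /es.
  by rewrite ds.
by move=> y; apply: addv_ext.
Qed.

Lemma sub_dim (A T : V -> Prop) k : subspace A -> subspace T -> subs A T ->
  (dimf A <= k <= dimf T)%N ->
  exists B, [/\ subspace B, subs A B, subs B T & dimf B = k].
Proof.
move=> hA hT at_ /andP[l1 l2]; have [s [hs ds es]] := basis hA.
have [r [hr er]] := extend hT hs (fun x hx => at_ x (proj2 (es x) (mem_sp hx))).
have dT : dimf T = size (r ++ s) by apply: dimf_dimv; exists (r ++ s).
set r2 := drop (size r - (k - size s)) r.
have hi : indep (r2 ++ s).
  move: hr; rewrite -{1}(cat_take_drop (size r - (k - size s)) r) -catA.
  by case/indep_cat.
exists (sp (r2 ++ s)); split.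
- exact: sp_subspace.
- by move=> x /es hx; apply: (sp_subl hx) => y; rewrite mem_cat => ->; rewrite orbT.
- move=> x hx; apply/er; apply: (sp_subl hx) => y; rewrite !mem_cat => /orP[|->]; last by rewrite orbT.
  by move/mem_drop => ->.
- rewrite dimf_sp // size_cat size_drop; move: l1 l2; rewrite dT -ds size_cat; clear; lia.
Qed.

Lemma hyperplane (A P : V -> Prop) z : subspace A -> subspace P -> subs A P -> P z -> ~ A z ->
  exists H, [/\ subspace H, subs A H, subs H P, ~ H z & (dimf H).+1 = dimf P].
Proof.
move=> hA hP ap Pz nz; have [s [hs ds es]] := basis hA.
have hzs : indep (z :: s) by apply/indep_cons; split => // /es.
have [r [hr er]] : exists r, indep (r ++ z :: s) /\ (forall x, P x <-> sp (r ++ z :: s) x).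
  apply: extend => // x; rewrite inE => /orP[/eqP->//|xs].
  by apply: ap; apply/es; apply: mem_sp.
have dP : dimf P = size (r ++ z :: s) by apply: dimf_dimv; exists (r ++ z :: s).
have /indep_cons [nz' hi] : indep (z :: r ++ s).
  by apply: (indep_perm _ hr); move: (perm_catCA r [:: z] s) => /= ->.
exists (sp (r ++ s)); split => //.
- exact: sp_subspace.
- by move=> x /es hx; apply: (sp_subl hx) => y; rewrite mem_cat => ->; rewrite orbT.
- move=> x hx; apply/er; apply: (sp_subl hx) => y; rewrite !mem_cat inE.
  by case/orP=> ->; rewrite ?orbT.
- by rewrite dimf_sp // dP !size_cat /= addnS.
Qed.

Definition fam d (v : 'I_d -> V) : seq V := [seq v i | i <- enum 'I_d].

Lemma fam_S d (v : 'I_d.+1 -> V) : fam v = v ord0 :: fam (fun i => v (lift ord0 i)).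
Proof. by rewrite /fam enum_ordSl /= -map_comp. Qed.

Lemma size_fam d (v : 'I_d -> V) : size (fam v) = d.
Proof. by rewrite size_map size_enum_ord. Qed.

Lemma in_span_S d (v : 'I_d.+1 -> V) x :
  in_span v x <-> exists a, in_span (fun i => v (lift ord0 i)) (x - a *: v ord0).
Proof.
split.
  case=> c ->; exists (c ord0); exists (fun i => c (lift ord0 i)).
  by rewrite big_ord_recl addrAC subrr add0r.
case=> a [c e]; exists (fun i => if unlift ord0 i is Some j then c j else a).
rewrite big_ord_recl unlift_none.
under eq_bigr => i _ do rewrite liftK.
by rewrite -e addrC subrK.
Qed.

Lemma in_span_fam d (v : 'I_d -> V) x : in_span v x <-> sp (fam v) x.
Proof.
elim: d v x => [|d IH] v x.
  rewrite /fam enum_ord0 /=; split; first by case=> c ->; rewrite big_ord0.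
  by move->; exists (fun _ => 0); rewrite big_ord0.
rewrite in_span_S fam_S /=; split; case=> a h; exists a; by apply/IH.
Qed.

Lemma lin_indep_S d (v : 'I_d.+1 -> V) :
  lin_indep v <-> ~ in_span (fun i => v (lift ord0 i)) (v ord0) /\ lin_indep (fun i => v (lift ord0 i)).
Proof.
split.
  move=> h; split.
    case=> c e.
    have := h (fun i => if unlift ord0 i is Some j then - c j else 1).
    rewrite big_ord_recl unlift_none scale1r.
    under eq_bigr => i _ do rewrite liftK scaleNr.
    rewrite sumrN -e subrr => /(_ erefl ord0); rewrite unlift_none => /eqP.
    by rewrite oner_eq0.
  move=> c e j.
  have := h (fun i => if unlift ord0 i is Some j then c j else 0).
  rewrite big_ord_recl unlift_none scale0r add0r.
  under eq_bigr => i _ do rewrite liftK.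
  by move=> /(_ e (lift ord0 j)); rewrite liftK.
case=> nin hi c e.
have [c0|c0] := eqVneq (c ord0) 0; last first.
  exfalso; apply: nin; exists (fun j => - ((c ord0)^-1 * c (lift ord0 j))).
  move: e; rewrite big_ord_recl => /eqP; rewrite addr_eq0 => /eqP e.
  rewrite -[v ord0]scale1r -(unitP c0) -scalerA e scalerN scaler_sumr -sumrN.
  by apply: eq_bigr => i _; rewrite scalerA scaleNr.
move: e; rewrite big_ord_recl c0 scale0r add0r => /hi h t.
by case: (unliftP ord0 t) => [j ->|->] //; apply: h.
Qed.

Lemma indep_fam d (v : 'I_d -> V) : lin_indep v <-> indep (fam v).
Proof.
elim: d v => [|d IH] v.
  rewrite /fam enum_ord0; split => _; first exact: indep_nil.
  by move=> c _ [].
rewrite lin_indep_S fam_S indep_cons -IH -in_span_fam; by [].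
Qed.

Lemma has_vdim_iff d (S : V -> Prop) : has_vdim d S <-> subspace S /\ dimf S = d.
Proof.
split.
  case=> v [/indep_fam hi e].
  have e' : forall x, S x <-> sp (fam v) x by move=> x; rewrite e in_span_fam.
  split; first exact: (subspace_ext e' (sp_subspace _)).
  by apply: dimf_dimv; exists (fam v); rewrite size_fam.
case=> hS dS; have [s [hs ds es]] := basis hS.
have fs : fam (fun i : 'I_d => nth 0 s i) = s.
  have -> : fam (fun i : 'I_d => nth 0 s i) = map (nth 0 s) (map val (enum 'I_d)).
    by rewrite /fam -map_comp.
  by rewrite val_enum_ord -dS -ds; exact: mkseq_nth.
exists (fun i : 'I_d => nth 0 s i); split; first by apply/indep_fam; rewrite fs.
by move=> x; rewrite in_span_fam fs.
Qed.

Lemma is_pspace_iff (m : int) (S : V -> Prop) :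
  is_pspace m S <-> subspace S /\ (dimf S)%:Z = m + 1.
Proof.
split; first by case=> d [e /has_vdim_iff [hS dS]]; split => //; rewrite dS.
by case=> hS e; exists (dimf S); split => //; apply/has_vdim_iff.
Qed.

Lemma dimf_full : dimf (fun _ : V => True) = N.
Proof.
have hi : indep E.
  have -> : E = fam (fun j : 'I_N => (delta_mx 0 j : V)) by [].
  apply/indep_fam => c e t0.
  have := congr1 (fun A : V => A 0 t0) e; rewrite /= summxE mxE => <-.
  rewrite (bigD1 t0) //= big1 ?addr0; first by rewrite !mxE !eqxx /= mulr1.
  by move=> i ni; rewrite !mxE eqxx /= eq_sym (negbTE ni) mulr0.
suff h : dimf (fun _ : V => True) = size E by rewrite h size_E.
apply: dimf_dimv; exists E; split => // x; split => // _; exact: spE.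
Qed.

Lemma subspace_full : subspace (fun _ : V => True). Proof. by []. Qed.

Lemma not_full (S : V -> Prop) : subspace S -> (dimf S < N)%N -> exists w, ~ S w.
Proof.
move=> hS lt; have lt' : (dimf S < dimf (fun _ : V => True))%N by rewrite dimf_full.
have [w [_ nw]] := dimf_lt_ex hS subspace_full lt'.
by exists w.
Qed.

Lemma dimf_sum_le (S T : V -> Prop) : subspace S -> subspace T ->
  (dimf (sumS S T) <= dimf S + dimf T)%N.
Proof. by move=> hS hT; have := grassmann hS hT; clear; lia. Qed.

Lemma scale_in (S : V -> Prop) (a : L) x : subspace S -> a != 0 -> S (a *: x) -> S x.
Proof. by move=> hS a0 h; rewrite -[x]scale1r -(unitP a0) -scalerA; apply: subspaceZ. Qed.

Lemma two_avoid (T A B : V -> Prop) : subspace T -> subspace A -> subspace B ->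
  (exists x, T x /\ ~ A x) -> (exists y, T y /\ ~ B y) ->
  exists w, [/\ T w, ~ A w & ~ B w].
Proof.
move=> hT hA hB [x [Tx nAx]] [y [Ty nBy]].
case: (classic (B x)) => Bx; last by exists x.
case: (classic (A y)) => Ay; last by exists y.
exists (x + y); split; first exact: subspaceD.
  by move=> h; apply: nAx; have := subspaceB hA h Ay; rewrite addrK.
by move=> h; apply: nBy; have := subspaceB hB h Bx; rewrite addrAC subrr add0r.
Qed.

Lemma pair_contra (X : V -> Prop) (y z : V) (a b : L) : subspace X -> ~ X y ->
  X (z + a *: y) -> X (z + b *: y) -> a != b -> False.
Proof.
move=> hX ny h1 h2 ab; apply: ny; apply: (@scale_in X (a - b)) => //; first by rewrite subr_eq0.
have := subspaceB hX h1 h2; rewrite scalerBl.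
by have -> : z + a *: y - (z + b *: y) = a *: y - b *: y by rewrite opprD addrACA subrr add0r.
Qed.

Lemma three_avoid (t : L) (T A B C : V -> Prop) : t != 0 -> t != 1 ->
  subspace T -> subspace A -> subspace B -> subspace C ->
  (exists x, T x /\ ~ A x) -> (exists y, T y /\ ~ B y) -> (exists z, T z /\ ~ C z) ->
  exists w, [/\ T w, ~ A w, ~ B w & ~ C w].
Proof.
move=> t0 t1 hT hA hB hC hxA hyB hzC.
have [y [Ty nBy nCy]] := two_avoid hT hB hC hyB hzC.
case: (classic (A y)) => Ay; last by exists y.
case: hxA => z [Tz nAz].
have hin : forall a : L, T (z + a *: y) /\ ~ A (z + a *: y).
  move=> a; split; first by apply: subspaceD => //; apply: subspaceZ.
  move=> h; apply: nAz; have := subspaceB hA h (subspaceZ a hA Ay); by rewrite addrK.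
have done_if : forall a, ~ (B (z + a *: y) \/ C (z + a *: y)) ->
    exists w, [/\ T w, ~ A w, ~ B w & ~ C w].
  move=> a h; exists (z + a *: y); case: (hin a) => ? ?; split => // hh; apply: h; [left|right]; exact hh.
case: (classic (B (z + 0 *: y) \/ C (z + 0 *: y))) => [hz|/done_if//].
case: (classic (B (z + 1 *: y) \/ C (z + 1 *: y))) => [hz1|/done_if//].
case: (classic (B (z + t *: y) \/ C (z + t *: y))) => [hzt|/done_if//].

have t10 : (1 : L) != 0 by exact: oner_neq0.
have t01 : (0 : L) != 1 by rewrite eq_sym.
have tt1 : (1 : L) != t by rewrite eq_sym.
have tt0 : (0 : L) != t by rewrite eq_sym.
exfalso.
case: hz => hz; case: hz1 => hz1; case: hzt => hzt.
- exact: (pair_contra hB nBy hz hz1).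
- exact: (pair_contra hB nBy hz hz1).
- exact: (pair_contra hB nBy hz hzt).
- exact: (pair_contra hC nCy hz1 hzt).
- exact: (pair_contra hB nBy hz1 hzt).
- exact: (pair_contra hC nCy hz hzt).
- exact: (pair_contra hC nCy hz hz1).
- exact: (pair_contra hC nCy hz hz1).
Qed.

Lemma addv_meet (Q Z : V -> Prop) w y : subspace Q -> subspace Z -> ~ sumS Q Z w ->
  addv Q w y -> Z y -> Q y.
Proof.
move=> hQ hZ nw [al ha] Zy.
have [a0|a0] := eqVneq al 0; first by move: ha; rewrite a0 scale0r subr0.
exfalso; apply: nw; exists (- (al^-1 *: (y - al *: w))), (al^-1 *: y); split.
- by apply: subspaceN => //; apply: subspaceZ.
- by apply: subspaceZ.
- by rewrite scalerBr scalerA unitP // scale1r opprB subrK.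
Qed.

Lemma ext_gen (P Z1 Z2 Z3 : V -> Prop) a : subspace P -> subspace Z1 -> subspace Z2 -> subspace Z3 ->
  (dimf P <= a)%N ->
  (forall Q, subspace Q -> (dimf Q < a)%N -> exists w, [/\ ~ sumS Q Z1 w, ~ sumS Q Z2 w & ~ sumS Q Z3 w]) ->
  exists I, [/\ subspace I, dimf I = a, subs P I & forall x, I x ->
    [/\ Z1 x -> P x, Z2 x -> P x & Z3 x -> P x]].
Proof.
move=> hP h1 h2 h3 le AV.
suff : forall k Q, subspace Q -> subs P Q -> (forall x, Q x -> [/\ Z1 x -> P x, Z2 x -> P x & Z3 x -> P x]) ->
  (dimf Q + k = a)%N ->
  exists I, [/\ subspace I, dimf I = a, subs P I & forall x, I x -> [/\ Z1 x -> P x, Z2 x -> P x & Z3 x -> P x]].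
  move=> H; apply: (H (a - dimf P)%N P) => //; by move: le; clear; lia.
elim=> [|k IH] Q hQ pq hq e; first by exists Q; split => //; rewrite -e addn0.
have [w [n1 n2 n3]] := AV Q hQ (ltac:(move: e; clear; lia)).
have nQ : ~ Q w by move=> h; apply: n1; apply: sumS_l.
apply: (IH (addv Q w)).
- exact: subspace_addv.
- by move=> x /pq; apply: addv_l.
- move=> x hx; split => hz.
  + by case: (hq x (addv_meet hQ h1 n1 hx hz)) => H1 _ _; apply: H1.
  + by case: (hq x (addv_meet hQ h2 n2 hx hz)) => _ H1 _; apply: H1.
  + by case: (hq x (addv_meet hQ h3 n3 hx hz)) => _ _ H1; apply: H1.
- by rewrite dimf_addv // addSnnS.
Qed.

Lemma av_one (Z : V -> Prop) a b : subspace Z -> (dimf Z <= b)%N -> (a + b <= N)%N ->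
  forall Q, subspace Q -> (dimf Q < a)%N -> exists w, [/\ ~ sumS Q Z w, ~ sumS Q Z w & ~ sumS Q Z w].
Proof.
move=> hZ dZ ab Q hQ dQ.
have := dimf_sum_le hQ hZ => hs.
have [w nw] := @not_full (sumS Q Z) (subspace_sum hQ hZ) (ltac:(move: hs dZ ab dQ; clear; lia)).
by exists w.
Qed.

Lemma av_three (t : L) (Z1 Z2 Z3 : V -> Prop) a b : t != 0 -> t != 1 ->
  subspace Z1 -> subspace Z2 -> subspace Z3 ->
  (dimf Z1 <= b)%N -> (dimf Z2 <= b)%N -> (dimf Z3 <= b)%N -> (a + b <= N)%N ->
  forall Q, subspace Q -> (dimf Q < a)%N -> exists w, [/\ ~ sumS Q Z1 w, ~ sumS Q Z2 w & ~ sumS Q Z3 w].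
Proof.
move=> t0 t1 h1 h2 h3 d1 d2 d3 ab Q hQ dQ.
have ex : forall Z : V -> Prop, subspace Z -> (dimf Z <= b)%N -> exists x, True /\ ~ sumS Q Z x.
  move=> Z hZ dZ; have := dimf_sum_le hQ hZ => hs.
  have [w nw] := @not_full (sumS Q Z) (subspace_sum hQ hZ) (ltac:(move: hs dZ ab dQ; clear; lia)).
  by exists w.
have [w [_ ? ? ?]] := three_avoid t0 t1 subspace_full (subspace_sum hQ h1) (subspace_sum hQ h2)
  (subspace_sum hQ h3) (ex _ h1 d1) (ex _ h2 d2) (ex _ h3 d3).
by exists w.
Qed.

Lemma dimf_lt_of (S T : V -> Prop) x : subspace S -> subspace T -> subs S T -> T x -> ~ S x ->
  (dimf S < dimf T)%N.
Proof.
move=> hS hT st Tx nSx; rewrite ltn_neqAle dimf_le // andbT.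
apply/negP => /eqP e; apply: nSx; apply: (dimf_eq_sub hS hT st) => //; by rewrite e.
Qed.

Lemma dimf_meet_sub (Q J : V -> Prop) : subspace Q -> subspace J -> subs Q J -> dimf (meet Q J) = dimf Q.
Proof.
move=> hQ hJ qj; apply: (dimf_ext (subspace_meet hQ hJ)) => x; split; first by case.
by move=> h; split => //; apply: qj.
Qed.

Definition zero : V -> Prop := sp [::].
Lemma subspace_zero : subspace zero. Proof. exact: sp_subspace. Qed.
Lemma dimf_zero : dimf zero = 0%N. Proof. by rewrite /zero dimf_sp //; exact: indep_nil. Qed.

Lemma core_Q (Ja Jb Jc : V -> Prop) c : subspace Ja -> subspace Jb -> subspace Jc ->
  (1 <= c)%N -> (c <= dimf (meet Ja Jb))%N -> ~ subs (meet Ja Jb) Jc ->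
  exists Q, [/\ subspace Q, subs Q Ja, subs Q Jb, dimf Q = c & (dimf (meet Q Jc) < c)%N].
Proof.
move=> ha hb hc c1 cm nsub.
have [v [Mv nv]] : exists v, meet Ja Jb v /\ ~ Jc v.
  apply: NNPP => h; apply: nsub => x Mx; apply: NNPP => nx; apply: h; by exists x.
have hM := subspace_meet ha hb.
have nz : ~ zero v by move=> /= h; apply: nv; rewrite h; apply: subspace0.
have hA := subspace_addv v subspace_zero.
have dA : dimf (addv zero v) = 1%N by rewrite dimf_addv ?dimf_zero //; exact: subspace_zero.
have [Q [hQ aq qm dQ]] := @sub_dim (addv zero v) (meet Ja Jb) c hA hM
  (addv_min hM (fun x (h : zero x) => ltac:(rewrite h; exact: subspace0 hM)) Mv)
  (ltac:(by rewrite dA c1 cm)).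
exists Q; split => //; first by move=> x /qm [].
  by move=> x /qm [].
rewrite -dQ; apply: (@dimf_lt_of _ _ v (subspace_meet hQ hc) hQ) => //.
- by move=> x [].
- by apply: aq; apply: addv_x; exact: subspace_zero.
- by case.
Qed.

Lemma hyper_meet (H P J : V -> Prop) : subspace H -> subspace P -> subspace J -> subs H P ->
  (dimf H).+1 = dimf P -> (dimf (meet P J) <= (dimf (meet H J)).+1)%N.
Proof.
move=> hH hP hJ hp dH.
have hX := subspace_meet hP hJ.
have g := grassmann hH hX.
have s1 : (dimf (sumS H (meet P J)) <= dimf P)%N.
  apply: dimf_le => //; first exact: subspace_sum.
  by apply: sumS_min => // x []; [].
have e : dimf (meet H (meet P J)) = dimf (meet H J).
  apply: dimf_ext; first exact: subspace_meet.
  by move=> x; split; [case=> ? [] | case=> ? ?; split => //; split => //; apply: hp].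
move: g s1; rewrite e -dH; clear; lia.
Qed.

Section MainMin.
Variables (a b c : nat).

Definition Fam (Ja Jb : V -> Prop) (P : V -> Prop) :=
  [/\ subspace P, (forall x, Ja x -> Jb x -> P x), (dimf P <= a)%N,
      (c <= dimf (meet P Ja))%N & (c <= dimf (meet P Jb))%N].

Lemma Fam_swap Ja Jb P : Fam Ja Jb P -> Fam Jb Ja P.
Proof. by case=> h1 h2 h3 h4 h5; split => // x hb ha; apply: h2. Qed.

Definition mu (J3 P : V -> Prop) := (dimf (meet P J3) * N.+1 + dimf P)%N.

Lemma meet_subs (P Q J : V -> Prop) : subs P Q -> subs (meet P J) (meet Q J).
Proof. by move=> pq x [? ?]; split => //; apply: pq. Qed.

Lemma shrink (Ja Jb J3 : V -> Prop) P z : subspace Ja -> subspace Jb -> subspace J3 ->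
  Fam Ja Jb P -> P z -> ~ Jb z -> (c < dimf (meet P Ja))%N ->
  exists P', Fam Ja Jb P' /\ (mu J3 P' < mu J3 P)%N.
Proof.
move=> ha hb h3 [hP hab hPa hca hcb] Pz nz lt.
have [H [hH sH Hp nH dH]] := @hyperplane (meet P Jb) P z (subspace_meet hP hb) hP
  (fun x (h : meet P Jb x) => proj1 h) Pz (fun h => nz (proj2 h)).
exists H; split.
  split => //.
  - by move=> x xa xb; apply: sH; split => //; apply: hab.
  - by move: hPa; rewrite -dH; clear; lia.
  - by have := hyper_meet hH hP ha Hp dH; move: lt; clear; lia.
  - apply: leq_trans hcb _; apply: dimf_le; try exact: subspace_meet.
    by move=> x [Px bx]; split => //; apply: sH.
have l1 : (dimf (meet H J3) <= dimf (meet P J3))%N.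
  by apply: dimf_le; try exact: subspace_meet; apply: meet_subs.
have := leq_mul l1 (leqnn N.+1); rewrite /mu; move: dH; clear; lia.
Qed.

Lemma rotate (Ja Jb J3 : V -> Prop) P z3 y : subspace Ja -> subspace Jb -> subspace J3 ->
  Fam Ja Jb P -> meet P J3 z3 -> ~ Jb z3 -> Ja y -> ~ sumS P J3 y ->
  exists P', Fam Ja Jb P' /\ (mu J3 P' < mu J3 P)%N.
Proof.
move=> ha hb h3 [hP hab hPa hca hcb] [Pz z3J] nz ay ny.
have [H [hH sH Hp nH dH]] := @hyperplane (meet P Jb) P z3 (subspace_meet hP hb) hP
  (fun x (h : meet P Jb x) => proj1 h) Pz (fun h => nz (proj2 h)).
have nHy : ~ H y by move=> h; apply: ny; apply: sumS_l => //; apply: Hp.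
have hP' := subspace_addv y hH.
have dP' : dimf (addv H y) = dimf P by rewrite dimf_addv.
exists (addv H y); split.
  split => //.
  - by move=> x xa xb; apply: addv_l; apply: sH; split => //; apply: hab.
  - by rewrite dP'.
  - have hm := subspace_meet hH ha.
    have := hyper_meet hH hP ha Hp dH => l.
    have : (dimf (addv (meet H Ja) y) <= dimf (meet (addv H y) Ja))%N.
      apply: dimf_le; [exact: subspace_addv | exact: subspace_meet |].
      apply: addv_min; first exact: subspace_meet.
        by move=> x [hx ax]; split => //; apply: addv_l.
      by split => //; apply: addv_x.
    rewrite dimf_addv //; last by case.
    by move: hca l; clear; lia.
  - apply: leq_trans hcb _; apply: dimf_le; try exact: subspace_meet.
    by move=> x [Px bx]; split => //; apply: addv_l; apply: sH.
have nsum : ~ sumS H J3 y.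
  by case=> u [w [hu hw e]]; apply: ny; exists u, w; split => //; apply: Hp.
have l1 : (dimf (meet (addv H y) J3) <= dimf (meet H J3))%N.
  apply: dimf_le; try exact: subspace_meet.
  by move=> x [hx x3]; split => //; apply: (addv_meet hH h3 nsum hx).
have l2 : (dimf (meet H J3) < dimf (meet P J3))%N.
  apply: (@dimf_lt_of _ _ z3); try exact: subspace_meet.
  - by apply: meet_subs.
  - by split.
  - by case.
rewrite /mu dP' ltn_add2r ltn_pmul2r //; exact: leq_ltn_trans l1 l2.
Qed.

Variables (J1 J2 J3 : V -> Prop).
Hypotheses (h1 : subspace J1) (h2 : subspace J2) (h3 : subspace J3).
Hypotheses (d1 : dimf J1 = b) (d2 : dimf J2 = b) (d3 : dimf J3 = b).
Hypotheses (cb : (c < b)%N) (m12 : (dimf (meet J1 J2) < c)%N)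
  (m13 : (dimf (meet J1 J3) < c)%N) (m23 : (dimf (meet J2 J3) < c)%N).

Definition goalP P := [/\ subspace P, (dimf P <= a)%N, dimf (meet P J1) = c,
  dimf (meet P J2) = c & (dimf (meet P J3) < c)%N].

Lemma not_in_other (Ja Jb : V -> Prop) P : subspace Ja -> subspace Jb -> subspace P ->
  (dimf (meet Ja Jb) < c)%N -> (c <= dimf (meet P Ja))%N -> exists z, P z /\ ~ Jb z.
Proof.
move=> ha hb hP m le; apply: NNPP => h.
have : (dimf (meet P Ja) <= dimf (meet Ja Jb))%N.
  apply: dimf_le; try exact: subspace_meet.
  move=> x [Px ax]; split => //; apply: NNPP => nb; apply: h; by exists x.
by move: m le; clear; lia.
Qed.

Lemma step P : Fam J1 J2 P -> goalP P \/ exists P', Fam J1 J2 P' /\ (mu J3 P' < mu J3 P)%N.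
Proof.
move=> hF; case: (hF) => hP hab hPa hca hcb.
have [z [Pz nz]] := not_in_other h1 h2 hP m12 hca.
have [z' [Pz' nz']] := not_in_other h2 h1 hP (ltac:(by rewrite (dimf_ext (subspace_meet h2 h1) (fun x => and_comm _ _)))) hcb.
case: (ltnP c (dimf (meet P J1))) => [lt|le1].
  by right; apply: (shrink h1 h2 h3 hF Pz nz lt).
case: (ltnP c (dimf (meet P J2))) => [lt|le2].
  right; have [P' [hF' lt']] := shrink h2 h1 h3 (Fam_swap hF) Pz' nz' lt.
  by exists P'; split => //; apply: Fam_swap.
have e1 : dimf (meet P J1) = c by apply/eqP; rewrite eqn_leq le1 hca.
have e2 : dimf (meet P J2) = c by apply/eqP; rewrite eqn_leq le2 hcb.
case: (ltnP (dimf (meet P J3)) c) => [lt3|ge3]; first by left; split.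
right.
have hX1 := subspace_meet hP h1; have hX2 := subspace_meet hP h2; have hX3 := subspace_meet hP h3.
have hX12 := subspace_sum hX1 hX2.
case: (classic (subs P (sumS (meet P J1) (meet P J2)))) => [psub|]; last first.
  move=> ns; have [w [Pw nw]] : exists w, P w /\ ~ sumS (meet P J1) (meet P J2) w.
    by apply: NNPP => h; apply: ns => x Px; apply: NNPP => nx; apply: h; exists x.
  have [H [hH sH Hp nH dH]] := @hyperplane _ P w hX12 hP
    (sumS_min hP (fun x (h : meet P J1 x) => proj1 h) (fun x (h : meet P J2 x) => proj1 h)) Pw nw.
  exists H; split.
    split => //.
    - by move=> x xa xb; apply: sH; apply: sumS_l => //; split => //; apply: hab.
    - by move: hPa; rewrite -dH; clear; lia.
    - apply: leq_trans hca _; apply: dimf_le; try exact: subspace_meet.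
      by move=> x [Px ax]; split => //; apply: sH; apply: sumS_l => //; split.
    - apply: leq_trans hcb _; apply: dimf_le; try exact: subspace_meet.
      by move=> x [Px ax]; split => //; apply: sH; apply: sumS_r => //; split.
  have l1 : (dimf (meet H J3) <= dimf (meet P J3))%N.
    by apply: dimf_le; try exact: subspace_meet; apply: meet_subs.
  have := leq_mul l1 (leqnn N.+1); rewrite /mu; move: dH; clear; lia.
have [z3 [[Pz3 z3J3] nz3]] := not_in_other h3 h2 hX3
  (ltac:(by rewrite (dimf_ext (subspace_meet h3 h2) (fun x => and_comm _ _))))
  (ltac:(by rewrite (dimf_meet_sub hX3 h3 (fun x h => proj2 h)))).
have [z3' [[Pz3' z3J3'] nz3']] := not_in_other h3 h1 hX3
  (ltac:(by rewrite (dimf_ext (subspace_meet h3 h1) (fun x => and_comm _ _))))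
  (ltac:(by rewrite (dimf_meet_sub hX3 h3 (fun x h => proj2 h)))).
have hPJ3 := subspace_sum hP h3.
case: (classic (subs J1 (sumS P J3))) => [s1|ns1]; last first.
  have [y [ay ny]] : exists y, J1 y /\ ~ sumS P J3 y.
    by apply: NNPP => h; apply: ns1 => x ax; apply: NNPP => nx; apply: h; exists x.
  by apply: (rotate h1 h2 h3 hF (conj Pz3 z3J3) nz3 ay ny).
case: (classic (subs J2 (sumS P J3))) => [s2|ns2]; last first.
  have [y [ay ny]] : exists y, J2 y /\ ~ sumS P J3 y.
    by apply: NNPP => h; apply: ns2 => x ax; apply: NNPP => nx; apply: h; exists x.
  have [P' [hF' lt']] := rotate h2 h1 h3 (Fam_swap hF) (conj Pz3' z3J3') nz3' ay ny.
  by exists P'; split => //; apply: Fam_swap.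
exfalso.
have g12 := grassmann h1 h2.
have gP3 := grassmann hP h3.
have gX := grassmann hX1 hX2.
have l1 : (dimf (sumS J1 J2) <= dimf (sumS P J3))%N.
  by apply: dimf_le; [exact: subspace_sum | exact: hPJ3 | exact: sumS_min].
have l2 : (dimf P <= dimf (sumS (meet P J1) (meet P J2)))%N by apply: dimf_le.
have l3 : (dimf (meet J1 J2) <= dimf (meet (meet P J1) (meet P J2)))%N.
  apply: dimf_le; try exact: subspace_meet.
  by move=> x [ax bx]; have Px := hab x ax bx; split; split.
move: g12 gP3 gX l1 l2 l3 ge3 cb; rewrite d1 d2 d3 e1 e2; clear; lia.
Qed.

Lemma mainmin : (2 * c <= a + dimf (meet J1 J2))%N -> exists P, goalP P.
Proof.
move=> hA.
have hM := subspace_meet h1 h2.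
have [Y1 [hY1 mY1 Y1J dY1]] := @sub_dim (meet J1 J2) J1 c hM h1 (fun x h => proj1 h)
  (ltac:(by rewrite d1 (ltnW m12) (ltnW cb))).
have [Y2 [hY2 mY2 Y2J dY2]] := @sub_dim (meet J1 J2) J2 c hM h2 (fun x h => proj2 h)
  (ltac:(by rewrite d2 (ltnW m12) (ltnW cb))).
have hY := subspace_sum hY1 hY2.
have F0 : Fam J1 J2 (sumS Y1 Y2).
  split => //.
  - by move=> x ax bx; apply: sumS_l => //; apply: mY1.
  - have g := grassmann hY1 hY2.
    have : (dimf (meet J1 J2) <= dimf (meet Y1 Y2))%N.
      by apply: dimf_le; try exact: subspace_meet; move=> x hx; split; [apply: mY1|apply: mY2].
    by move: g hA; rewrite dY1 dY2; clear; lia.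
  - rewrite -dY1; apply: dimf_le => //; first exact: subspace_meet.
    by move=> x hx; split; [apply: sumS_l | apply: Y1J].
  - rewrite -dY2; apply: dimf_le => //; first exact: subspace_meet.
    by move=> x hx; split; [apply: sumS_r | apply: Y2J].
suff : forall n P, (mu J3 P <= n)%N -> Fam J1 J2 P -> exists P, goalP P.
  by move/(_ _ (sumS Y1 Y2) (leqnn _) F0).
elim=> [|n IH] P hle hF; (case: (step hF) => [g|[P' [hF' lt]]]; first by exists P).
  by move: hle lt; clear; lia.
by apply: (IH P') => //; move: hle lt; clear; lia.
Qed.

End MainMin.

Definition CL2 a c (Ja Jb Jc : V -> Prop) := forall P, subspace P -> (dimf P <= a)%N ->
  (c <= dimf (meet P Ja))%N -> (c <= dimf (meet P Jb))%N -> (c <= dimf (meet P Jc))%N.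
Definition CL3 a c (Ja Jb Jc : V -> Prop) := forall P, subspace P -> (dimf P <= a)%N ->
  dimf (meet P Ja) = c -> dimf (meet P Jb) = c -> dimf (meet P Jc) = c.

Lemma G2a a c (Ja Jb Jc : V -> Prop) : subspace Ja -> subspace Jb -> subspace Jc ->
  CL2 a c Ja Jb Jc -> (1 <= c)%N -> (c <= a)%N -> (c <= dimf (meet Ja Jb))%N -> subs (meet Ja Jb) Jc.
Proof.
move=> ha hb hc cl c1 ca cm; apply: NNPP => ns.
have [Q [hQ qa qb dQ lt]] := core_Q ha hb hc c1 cm ns.
have := cl Q hQ (ltac:(by rewrite dQ)) (ltac:(by rewrite dimf_meet_sub // dQ))
  (ltac:(by rewrite dimf_meet_sub // dQ)).
by move: lt; clear; lia.
Qed.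

Lemma G3a a c (Ja Jb Jc : V -> Prop) : subspace Ja -> subspace Jb -> subspace Jc ->
  CL3 a c Ja Jb Jc -> (1 <= c)%N -> (c <= a)%N -> (c <= dimf (meet Ja Jb))%N -> subs (meet Ja Jb) Jc.
Proof.
move=> ha hb hc cl c1 ca cm; apply: NNPP => ns.
have [Q [hQ qa qb dQ lt]] := core_Q ha hb hc c1 cm ns.
have := cl Q hQ (ltac:(by rewrite dQ)) (ltac:(by rewrite dimf_meet_sub // dQ))
  (ltac:(by rewrite dimf_meet_sub // dQ)).
by move: lt; clear; lia.
Qed.

Lemma ex_notin (S T : V -> Prop) : ~ subs S T -> exists x, S x /\ ~ T x.
Proof. by move=> ns; apply: NNPP => h; apply: ns => x Sx; apply: NNPP => nx; apply: h; exists x. Qed.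

Lemma G3b a c (J1 J2 J3 : V -> Prop) : subspace J1 -> subspace J2 -> subspace J3 ->
  CL3 a c J1 J2 J3 -> (c < a)%N -> (c <= dimf (meet (meet J1 J2) J3))%N ->
  ~ subs J3 J1 -> ~ subs J3 J2 -> False.
Proof.
move=> h1 h2 h3 cl ca cd n1 n2.
have hD := subspace_meet (subspace_meet h1 h2) h3.
have [Q [hQ _ qD dQ]] := @sub_dim zero _ c subspace_zero hD
  (fun x (h : zero x) => ltac:(rewrite h; exact: subspace0 hD)) (ltac:(by rewrite dimf_zero cd)).
have [x [x3 nx1 nx2]] := two_avoid h3 h1 h2 (ex_notin n1) (ex_notin n2).
have q1 : subs Q J1 by move=> y /qD [[]].
have q2 : subs Q J2 by move=> y /qD [[]].
have q3 : subs Q J3 by move=> y /qD [].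
have hP := subspace_addv x hQ.
have dP : dimf (addv Q x) = c.+1 by rewrite dimf_addv ?dQ // => /q1.
have key : forall J, subspace J -> subs Q J -> ~ J x -> dimf (meet (addv Q x) J) = c.
  move=> J hJ qJ nJ; rewrite -dQ; apply/eqP; rewrite eqn_leq; apply/andP; split.
    apply: dimf_le => //; first exact: subspace_meet.
    move=> y [Py Jy]; apply: (addv_meet hQ hJ _ Py Jy).
    by move=> hs; apply: nJ; apply: (sumS_min hJ qJ (fun z h => h)).
  apply: dimf_le => //; first exact: subspace_meet.
  by move=> y Qy; split; [apply: addv_l | apply: qJ].
have := cl _ hP (ltac:(by rewrite dP)) (key _ h1 q1 nx1) (key _ h2 q2 nx2).
rewrite dimf_meet_sub //; first by rewrite dP; clear; lia.
by apply: addv_min.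
Qed.

Lemma G2d a c (J1 J2 J3 : V -> Prop) : subspace J1 -> subspace J2 -> subspace J3 ->
  CL2 a c J1 J2 J3 -> (1 <= c)%N -> (c < a)%N -> (c <= (dimf (meet (meet J1 J2) J3)).+1)%N ->
  forall x1, J1 x1 -> ~ J3 x1 -> subs J2 (addv J3 x1).
Proof.
move=> h1 h2 h3 cl c1 ca cd x1 a1 n1; apply: NNPP => ns.
have [x2 [b2 n2]] := ex_notin ns.
have hD := subspace_meet (subspace_meet h1 h2) h3.
have [Q [hQ _ qD dQ]] := @sub_dim zero _ c.-1 subspace_zero hD
  (fun x (h : zero x) => ltac:(rewrite h; exact: subspace0 hD))
  (ltac:(by rewrite dimf_zero /=; move: cd; clear; lia)).
have q1 : subs Q J1 by move=> y /qD [[]].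
have q2 : subs Q J2 by move=> y /qD [[]].
have q3 : subs Q J3 by move=> y /qD [].
have h31 := subspace_addv x1 h3.
have s31 : subs J3 (addv J3 x1) by move=> y; apply: addv_l.
have hQ1 := subspace_addv x1 hQ.
have Q1s : subs (addv Q x1) (addv J3 x1).
  by apply: addv_min => //; [move=> y /q3 /s31 | apply: addv_x].
have hP := subspace_addv x2 hQ1.
have dQ1 : dimf (addv Q x1) = c by rewrite dimf_addv // ?dQ; [move: c1; clear; lia | move=> /q3].
have dP : dimf (addv (addv Q x1) x2) = c.+1 by rewrite dimf_addv ?dQ1 // => /Q1s.
have hQ2 := subspace_addv x2 hQ.
have := cl _ hP (ltac:(by rewrite dP)).
move=> H.
have l1 : (c <= dimf (meet (addv (addv Q x1) x2) J1))%N.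
  rewrite -{1}dQ1; apply: dimf_le => //; first exact: subspace_meet.
  move=> y hy; split; first by apply: addv_l.
  by apply: (addv_min h1 q1 a1).
have l2 : (c <= dimf (meet (addv (addv Q x1) x2) J2))%N.
  have -> : c = dimf (addv Q x2).
    by rewrite dimf_addv // ?dQ; [move: c1; clear; lia | move=> /q3 x3; apply: n2; apply: s31].
  apply: dimf_le => //; first exact: subspace_meet.
  move=> y hy; split; last by apply: (addv_min h2 q2 b2).
  apply: (addv_min hP _ _ hy); first by move=> z Qz; do 2 apply: addv_l.
  exact: addv_x.
have l3 : (dimf (meet (addv (addv Q x1) x2) J3) <= dimf Q)%N.
  apply: dimf_le => //; first exact: subspace_meet.
  move=> y [hy y3].
  have ns1 : ~ sumS (addv Q x1) J3 x2.
    by move=> hs; apply: n2; apply: (sumS_min h31 Q1s s31).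
  have Q1y := addv_meet hQ1 h3 ns1 hy y3.
  have ns0 : ~ sumS Q J3 x1 by move=> hs; apply: n1; apply: (sumS_min h3 q3 (fun z h => h)).
  exact: (addv_meet hQ h3 ns0 Q1y y3).
have := H l1 l2; move: l3; rewrite dQ; move: c1; clear; lia.
Qed.

Lemma CL2_of a b c (Ja Jb Jc : V -> Prop) : subspace Ja -> subspace Jb -> subspace Jc ->
  (dimf Jc <= b)%N -> (a + b <= N)%N ->
  (forall I, subspace I -> dimf I = a -> (c <= dimf (meet I Ja))%N -> (c <= dimf (meet I Jb))%N ->
     (c <= dimf (meet I Jc))%N) -> CL2 a c Ja Jb Jc.
Proof.
move=> ha hb hc dc ab H P hP dP la lb.
have [I [hI dI pI iP]] := ext_gen hP hc hc hc dP (av_one hc dc ab).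
have mono : forall J, subspace J -> (dimf (meet P J) <= dimf (meet I J))%N.
  by move=> J hJ; apply: dimf_le; try exact: subspace_meet; apply: meet_subs.
have := H I hI dI (leq_trans la (mono _ ha)) (leq_trans lb (mono _ hb)).
move=> l; apply: (leq_trans l); apply: dimf_le; try exact: subspace_meet.
by move=> x [Ix cx]; split => //; case: (iP x Ix) => _ _; apply.
Qed.

Lemma CL3_of (t : L) a b c (Ja Jb Jc : V -> Prop) : t != 0 -> t != 1 ->
  subspace Ja -> subspace Jb -> subspace Jc ->
  (dimf Ja <= b)%N -> (dimf Jb <= b)%N -> (dimf Jc <= b)%N -> (a + b <= N)%N ->
  (forall I, subspace I -> dimf I = a -> dimf (meet I Ja) = c -> dimf (meet I Jb) = c ->
     dimf (meet I Jc) = c) -> CL3 a c Ja Jb Jc.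
Proof.
move=> t0 t1 ha hb hc da db dc ab H P hP dP la lb.
have [I [hI dI pI iP]] := ext_gen hP ha hb hc dP (av_three t0 t1 ha hb hc da db dc ab).
have eq : forall J, subspace J -> (forall x, I x -> J x -> P x) -> dimf (meet I J) = dimf (meet P J).
  move=> J hJ h; apply: dimf_ext; first exact: subspace_meet.
  by move=> x; split; case=> ??; split => //; [apply: h | apply: pI].
rewrite -(eq _ hc); last by move=> x Ix; case: (iP x Ix).
apply: H => //.
  by rewrite (eq _ ha) // => x Ix; case: (iP x Ix).
by rewrite (eq _ hb) // => x Ix; case: (iP x Ix).
Qed.

Lemma I0_bound a c (I J1 J2 : V -> Prop) : subspace I -> subspace J1 -> subspace J2 -> dimf I = a ->
  (c <= dimf (meet I J1))%N -> (c <= dimf (meet I J2))%N -> (2 * c <= a + dimf (meet J1 J2))%N.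
Proof.
move=> hI h1 h2 dI l1 l2.
have hX1 := subspace_meet hI h1; have hX2 := subspace_meet hI h2.
have g := grassmann hX1 hX2.
have s1 : (dimf (sumS (meet I J1) (meet I J2)) <= dimf I)%N.
  by apply: dimf_le => //; [exact: subspace_sum | apply: sumS_min => // x []].
have s2 : (dimf (meet (meet I J1) (meet I J2)) <= dimf (meet J1 J2))%N.
  by apply: dimf_le; try exact: subspace_meet; move=> x [[_ ?] [_ ?]].
by move: g s1 s2 l1 l2; rewrite dI; clear; lia.
Qed.

Lemma meet_comm_dim (S T : V -> Prop) : subspace S -> subspace T -> dimf (meet S T) = dimf (meet T S).
Proof. by move=> hS hT; apply: dimf_ext; [exact: subspace_meet | move=> x; split; case]. Qed.

Lemma ns_of (S T : V -> Prop) : subspace S -> subspace T -> dimf S = dimf T ->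
  ~ same_space S T -> ~ subs S T.
Proof.
move=> hS hT e ns st; apply: ns => x; split; first exact: st.
by apply: (dimf_eq_sub hS hT st); rewrite e.
Qed.

Section Types.
Variables (a b c : nat) (J1 J2 J3 : V -> Prop).
Hypotheses (h1 : subspace J1) (h2 : subspace J2) (h3 : subspace J3).
Hypotheses (d1 : dimf J1 = b) (d2 : dimf J2 = b) (d3 : dimf J3 = b).
Hypotheses (ca : (c < a)%N) (cb : (c < b)%N) (ab : (a + b <= N)%N).
Hypotheses (n12 : ~ subs J1 J2) (n21 : ~ subs J2 J1) (n13 : ~ subs J1 J3) (n31 : ~ subs J3 J1)
  (n23 : ~ subs J2 J3) (n32 : ~ subs J3 J2).
Hypothesis hI0 : (2 * c <= a + dimf (meet J1 J2))%N.

Let hD := subspace_meet (subspace_meet h1 h2) h3.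

Lemma D_ge (s12 : (c <= dimf (meet J1 J2))%N -> subs (meet J1 J2) J3)
  (s13 : (c <= dimf (meet J1 J3))%N -> subs (meet J1 J3) J2)
  (s23 : (c <= dimf (meet J2 J3))%N -> subs (meet J2 J3) J1) :
  (c <= dimf (meet (meet J1 J2) J3))%N \/
  [/\ (dimf (meet J1 J2) < c)%N, (dimf (meet J1 J3) < c)%N & (dimf (meet J2 J3) < c)%N].
Proof.
case: (ltnP (dimf (meet J1 J2)) c) => l12; last first.
  left; apply: (leq_trans l12); apply: (dimf_le (subspace_meet h1 h2) hD).
  by move=> x hx; split => //; apply: s12.
case: (ltnP (dimf (meet J1 J3)) c) => l13; last first.
  left; apply: (leq_trans l13); apply: (dimf_le (subspace_meet h1 h3) hD).
  by move=> x [x1 x3]; have x2 := s13 l13 x (conj x1 x3); split.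
case: (ltnP (dimf (meet J2 J3)) c) => l23; last first.
  left; apply: (leq_trans l23); apply: (dimf_le (subspace_meet h2 h3) hD).
  by move=> x [x2 x3]; have x1 := s23 l23 x (conj x2 x3); split.
by right.
Qed.

Lemma typeII : (1 <= c)%N -> CL2 a c J1 J2 J3 -> CL2 a c J1 J3 J2 -> CL2 a c J2 J3 J1 ->
  dimf (meet (meet J1 J2) J3) = b.-1 /\
  exists S, [/\ subspace S, dimf S = b.+1, subs J1 S, subs J2 S & subs J3 S] /\
     forall U : V -> Prop, subspace U -> subs J1 U -> subs J2 U -> subs J3 U -> subs S U.
Proof.
move=> c1 cl123 cl132 cl231.
have s12 := G2a h1 h2 h3 cl123 c1 (ltnW ca).
have s13 := G2a h1 h3 h2 cl132 c1 (ltnW ca).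
have s23 := G2a h2 h3 h1 cl231 c1 (ltnW ca).
have dD : (c <= dimf (meet (meet J1 J2) J3))%N.
  case: (D_ge s12 s13 s23) => // [[l12 l13 l23]].
  have [P [hP dP e1 e2 lt]] := mainmin h1 h2 h3 d1 d2 d3 cb l12 l13 l23 hI0.
  have := cl123 P hP dP (ltac:(by rewrite e1)) (ltac:(by rewrite e2)).
  by move: lt; clear; lia.
have [x1 [a1 nx1]] := ex_notin n13.
have G := G2d h1 h2 h3 cl123 c1 ca (ltac:(move: dD; clear; lia)).
have sub2 := G x1 a1 nx1.
have hS := subspace_addv x1 h3.
have dS : dimf (addv J3 x1) = b.+1 by rewrite dimf_addv // d3.
have s3S : subs J3 (addv J3 x1) by move=> y; apply: addv_l.
have s1S : subs J1 (addv J3 x1).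
  apply: NNPP => ns; have [x1' [a1' nx1']] := ex_notin ns.
  have nx1'' : ~ J3 x1' by move=> h; apply: nx1'; apply: s3S.
  have sub2' := G x1' a1' nx1''.
  apply: n23 => y y2.
  have ns' : ~ sumS J3 (addv J3 x1) x1' by move=> h; apply: nx1'; apply: (sumS_min hS s3S (fun z h => h)).
  by apply: (addv_meet h3 hS ns' (sub2' y y2) (sub2 y y2)).
split; last first.
  exists (addv J3 x1); split => // U hU u1 u2 u3.
  by apply: addv_min => //; apply: u1.
have g := grassmann h1 h3.
have l1 : (dimf (sumS J1 J3) <= b.+1)%N by rewrite -dS; apply: dimf_le => //; [exact: subspace_sum | exact: sumS_min].
have l2 : (dimf (meet J1 J3) < b)%N.
  rewrite -d1; apply: (@dimf_lt_of _ _ x1) => //; first exact: subspace_meet.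
  - by move=> x [].
  - by case.
have e13 : dimf (meet J1 J3) = b.-1 by move: g l1 l2; rewrite d1 d3; clear; lia.
have m13 : subs (meet J1 J3) J2 by apply: s13; rewrite e13; move: cb; clear; lia.
rewrite -e13; apply: dimf_ext => //.
by move=> x; split; [case=> [[? ?] ?]; split | case=> x1' x3; split => //; split => //; apply: m13].
Qed.

Lemma typeIII (t : L) : t != 0 -> t != 1 -> CL3 a c J1 J2 J3 -> CL3 a c J1 J3 J2 -> CL3 a c J2 J3 J1 -> False.
Proof.
move=> t0 t1 cl123 cl132 cl231.
case: (posnP c) => [c0|c1].
  by apply: (G3b h1 h2 h3 cl123 ca _ n31 n32); rewrite c0.
have s12 := G3a h1 h2 h3 cl123 c1 (ltnW ca).
have s13 := G3a h1 h3 h2 cl132 c1 (ltnW ca).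
have s23 := G3a h2 h3 h1 cl231 c1 (ltnW ca).
case: (D_ge s12 s13 s23) => [dD|[l12 l13 l23]].
  exact: (G3b h1 h2 h3 cl123 ca dD n31 n32).
have [P [hP dP e1 e2 lt]] := mainmin h1 h2 h3 d1 d2 d3 cb l12 l13 l23 hI0.
have := cl123 P hP dP e1 e2.
by move: lt; clear; lia.
Qed.

End Types.

Lemma adj_ge_iff (k : int) (c : nat) (I J : V -> Prop) : k = c%:Z - 1 -> subspace I -> subspace J ->
  (adj_ge k I J <-> (c <= dimf (meet I J))%N).
Proof.
move=> kc hI hJ; split.
  case=> m [km /is_pspace_iff [_ e]].
  by move: km e; rewrite kc; clear; lia.
move=> le; exists ((dimf (meet I J))%:Z - 1); split; first by rewrite kc; move: le; clear; lia.
apply/is_pspace_iff; split; first exact: subspace_meet.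
by clear; lia.
Qed.

Lemma adj_eq_iff (k : int) (c : nat) (I J : V -> Prop) : k = c%:Z - 1 -> subspace I -> subspace J ->
  (adj_eq k I J <-> dimf (meet I J) = c).
Proof.
move=> kc hI hJ; rewrite /adj_eq is_pspace_iff kc; split.
  by case=> _ e; move: e; clear; lia.
by move=> e; split; [exact: subspace_meet | rewrite e; clear; lia].
Qed.

Lemma span3_iff (J1 J2 J3 S : V -> Prop) : subspace S -> subs J1 S -> subs J2 S -> subs J3 S ->
  (forall U : V -> Prop, subspace U -> subs J1 U -> subs J2 U -> subs J3 U -> subs S U) ->
  forall x, span3 J1 J2 J3 x <-> S x.
Proof.
move=> hS s1 s2 s3 smin x; split.
  by move=> h; apply: h => // y [/s1|[/s2|/s3]].
move=> Sx U hU hy; apply: (smin U hU) => // y hy'; apply: hy; [left | right; left | right; right] => //.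
Qed.

Lemma rt_closure (G : (V -> Prop) -> (V -> Prop) -> Prop) (J1 J2 J3 I : V -> Prop) :
  ~ exactly_two (G I J1) (G I J2) (G I J3) ->
  [/\ G I J1 -> G I J2 -> G I J3, G I J1 -> G I J3 -> G I J2 & G I J2 -> G I J3 -> G I J1].
Proof.
move=> h; split=> a1 a2; apply: NNPP => n; apply: h.
- by apply: Or31.
- by apply: Or32.
- by apply: Or33.
Qed.

End LA.

Lemma three_elems (L : unitRingType) : ~ (exists f : L -> bool, bijective f) ->
  exists t : L, t != 0 /\ t != 1.
Proof.
move=> nb; apply: NNPP => h; apply: nb.
have all01 : forall t : L, t = 0 \/ t = 1.
  move=> t; apply: NNPP => n; apply: h; exists t; split; apply/eqP => e; apply: n; [left|right] => //.
exists (fun x : L => x == 1).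
apply: (@Bijective _ _ _ (fun b : bool => if b then (1 : L) else 0)).
  by move=> x; case: (all01 x) => ->; rewrite ?eqxx // eq_sym oner_eq0.
by case => /=; rewrite ?eqxx // eq_sym oner_eq0.
Qed.

Theorem lemma3p9 (L : unitRingType) (HL : skew_field L) (n i j : nat) (k : int)
  (Gamma : ('rV[L]_n.+1 -> Prop) -> ('rV[L]_n.+1 -> Prop) -> Prop)
  (HGamma :
     (* type II *)
     [/\ 0 <= k, k < (minn i j)%:Z, i%:Z + j%:Z <= n%:Z - 1 & Gamma = @adj_ge L n.+1 k]
     \/
     (* type III *)
     [/\ -1 <= k, k < (minn i j)%:Z, i%:Z + j%:Z <= n%:Z - 1,
         ~ (exists f : L -> bool, bijective f) & Gamma = @adj_eq L n.+1 k])
  (J1 J2 J3 : 'rV[L]_n.+1 -> Prop) :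
  round_up_triple Gamma i j J1 J2 J3 ->
  is_pspace (j%:Z - 1) (meet (meet J1 J2) J3) /\ is_pspace (j%:Z + 1) (span3 J1 J2 J3).
Proof.
case=> /(is_pspace_iff HL) [h1 e1] /(is_pspace_iff HL) [h2 e2] /(is_pspace_iff HL) [h3 e3]
  [ns12 ns13 ns23] [RU [I0 [/(is_pspace_iff HL) [hI0 eI0] g1 g2 g3]]].
have d1 : dimf J1 = j.+1 by move: e1; clear; lia.
have d2 : dimf J2 = j.+1 by move: e2; clear; lia.
have d3 : dimf J3 = j.+1 by move: e3; clear; lia.
have dI0 : dimf I0 = i.+1 by move: eI0; clear; lia.
have sym : forall S T : 'rV[L]_n.+1 -> Prop, ~ same_space S T -> ~ same_space T S.
  by move=> S T ns e; apply: ns => x; split => /e.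
have n12 := ns_of HL h1 h2 (etrans d1 (esym d2)) ns12.
have n21 := ns_of HL h2 h1 (etrans d2 (esym d1)) (sym _ _ ns12).
have n13 := ns_of HL h1 h3 (etrans d1 (esym d3)) ns13.
have n31 := ns_of HL h3 h1 (etrans d3 (esym d1)) (sym _ _ ns13).
have n23 := ns_of HL h2 h3 (etrans d2 (esym d3)) ns23.
have n32 := ns_of HL h3 h2 (etrans d3 (esym d2)) (sym _ _ ns23).
have [km1 kmin hij] : [/\ -1 <= k, k < (minn i j)%:Z & i%:Z + j%:Z <= n%:Z - 1].
  by case: HGamma => [[? ? ? _]|[? ? ? _ _]]; split => //; apply: le_trans (_ : 0 <= k).
have [c kc] : exists c : nat, k = c%:Z - 1.
  exists (absz (k + 1)); move: km1; clear; lia.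
have ca : (c < i.+1)%N by move: kmin; rewrite kc; clear; lia.
have cb : (c < j.+1)%N by move: kmin; rewrite kc; clear; lia.
have ab : (i.+1 + j.+1 <= n.+1)%N by move: hij; clear; lia.
have toI : forall I : 'rV[L]_n.+1 -> Prop, subspace I -> dimf I = i.+1 -> is_pspace i I.
  by move=> I hI dI; apply/(is_pspace_iff HL); split => //; rewrite dI; clear; lia.
have rt : forall I, is_pspace i I -> _ := fun I hI => rt_closure (RU I hI).
case: HGamma => [[k0 _ _ eG]|[_ _ _ nb eG]]; subst Gamma.
- have c1 : (0 < c)%N by move: k0; rewrite kc; clear; lia.
  have toA : forall I J : 'rV[L]_n.+1 -> Prop, subspace I -> subspace J ->
      (adj_ge k I J <-> (c <= dimf (meet I J))%N) := fun I J hI hJ => adj_ge_iff HL kc hI hJ.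
  have hb := I0_bound HL hI0 h1 h2 dI0 (proj1 (toA _ _ hI0 h1) g1) (proj1 (toA _ _ hI0 h2) g2).
  have cl : forall Ja Jb Jc : 'rV[L]_n.+1 -> Prop, subspace Ja -> subspace Jb -> subspace Jc -> dimf Jc = j.+1 ->
      (forall I, is_pspace i I -> adj_ge k I Ja -> adj_ge k I Jb -> adj_ge k I Jc) ->
      CL2 i.+1 c Ja Jb Jc.
    move=> Ja Jb Jc ha hb' hc dc H.
    have dc' : (dimf Jc <= j.+1)%N by rewrite dc.
    apply: (CL2_of HL ha hb' hc dc' ab).
    move=> I hI dI la lb; apply/(toA _ _ hI hc); apply: H; first exact: toI.
      by apply/(toA _ _ hI ha).
    by apply/(toA _ _ hI hb').
  have cl123 : CL2 i.+1 c J1 J2 J3 by apply: cl => // I hI; case: (rt I hI).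
  have cl132 : CL2 i.+1 c J1 J3 J2 by apply: cl => // I hI; case: (rt I hI).
  have cl231 : CL2 i.+1 c J2 J3 J1 by apply: cl => // I hI; case: (rt I hI).
  have [dD [S [[hS dS s1 s2 s3] smin]]] :=
    typeII HL h1 h2 h3 d1 d2 d3 ca cb n13 n23 hb c1 cl123 cl132 cl231.
  have e := span3_iff hS s1 s2 s3 smin.
  split; apply/(is_pspace_iff HL); split.
  + exact: subspace_meet (subspace_meet h1 h2) h3.
  + by rewrite dD /=; clear; lia.
  + exact: subspace_ext e hS.
  + rewrite -(dimf_ext HL hS (fun x => iff_sym (e x))) dS; clear; lia.
- have [t [t0 t1]] := three_elems nb.
  have toA : forall I J : 'rV[L]_n.+1 -> Prop, subspace I -> subspace J ->
      (adj_eq k I J <-> dimf (meet I J) = c) := fun I J hI hJ => adj_eq_iff HL kc hI hJ.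
  have hb : (2 * c <= i.+1 + dimf (meet J1 J2))%N.
    by apply: (I0_bound HL hI0 h1 h2 dI0); [rewrite (proj1 (toA _ _ hI0 h1) g1) | rewrite (proj1 (toA _ _ hI0 h2) g2)].
  have cl : forall Ja Jb Jc : 'rV[L]_n.+1 -> Prop, subspace Ja -> subspace Jb -> subspace Jc ->
      dimf Ja = j.+1 -> dimf Jb = j.+1 -> dimf Jc = j.+1 ->
      (forall I, is_pspace i I -> adj_eq k I Ja -> adj_eq k I Jb -> adj_eq k I Jc) ->
      CL3 i.+1 c Ja Jb Jc.
    move=> Ja Jb Jc ha hb' hc da db dc H.
    have da' : (dimf Ja <= j.+1)%N by rewrite da.
    have db' : (dimf Jb <= j.+1)%N by rewrite db.
    have dc' : (dimf Jc <= j.+1)%N by rewrite dc.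
    apply: (CL3_of HL t0 t1 ha hb' hc da' db' dc' ab).
    move=> I hI dI la lb; apply/(toA _ _ hI hc); apply: H; first exact: toI.
      by apply/(toA _ _ hI ha).
    by apply/(toA _ _ hI hb').
  have cl123 : CL3 i.+1 c J1 J2 J3 by apply: cl => // I hI; case: (rt I hI).
  have cl132 : CL3 i.+1 c J1 J3 J2 by apply: cl => // I hI; case: (rt I hI).
  have cl231 : CL3 i.+1 c J2 J3 J1 by apply: cl => // I hI; case: (rt I hI).
  by case: (typeIII HL h1 h2 h3 d1 d2 d3 ca cb n31 n32 hb t0 t1 cl123 cl132 cl231).
Qed.
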